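(* Let $F$ be a finite field of odd characteristic in which $-1$ is not a square, fix $C_0\ge1$, and let $A\subseteq F^2$ be $k$-regular (with constant $C_0$). Then $$\mathcal{R}(A)\lesssim |A|^2\,k,$$ with implied constant depending only on $C_0$.
   Context: For $x\cdot y=x_1y_1+x_2y_2$ on $F^2$: $(x_0,x_1,x_2)\in(F^2)^3$ is a corner if $(x_1-x_0)\cdot(x_2-x_1)=0$; $(x_0,x_1,x_2,x_3)\in(F^2)^4$ is a rectangle if $(x_i,x_{i+1},x_{i+2})$ is a corner for each $i\in\{0,1,2,3\}$, indices mod 4; $\mathcal{R}(A)$ is the number of rectangles in $A^4$. A line in $F^2$ is $\{p+tv:t\in F\}$ with $v\ne0$. $A$ is $k$-regular (with constant $C_0$) if $k\le C_0|A|^{1/2}$ and there exist a set $L$ of lines with $k/C_0\le|L|\le C_0k$ and a partition $A=\bigsqcup_{\ell\in L}A_\ell$ with $A_\ell\subseteq\ell$ and $|A|/(C_0k)\le|A_\ell|\le C_0|A|/k$ for each $\ell\in L$. *)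

(* Defs.v *)
From HB Require Import structures.
From mathcomp Require Import all_boot all_order all_algebra.
From mathcomp Require Import reals.
Set Implicit Arguments. Unset Strict Implicit. Unset Printing Implicit Defensive.
Import Order.TTheory GRing.Theory Num.Theory.
Local Open Scope ring_scope.

Section Defs.
Variable F : finFieldType.

Definition pt := (F * F)%type.

Definition padd (x y : pt) : pt := (x.1 + y.1, x.2 + y.2).
Definition psub (x y : pt) : pt := (x.1 - y.1, x.2 - y.2).
Definition pscale (t : F) (v : pt) : pt := (t * v.1, t * v.2).

Definition dot (x y : pt) : F := x.1 * y.1 + x.2 * y.2.

Definition corner (x0 x1 x2 : pt) : bool := dot (psub x1 x0) (psub x2 x1) == 0.

Definition rectangle (x0 x1 x2 x3 : pt) : bool :=
  [&& corner x0 x1 x2, corner x1 x2 x3, corner x2 x3 x0 & corner x3 x0 x1].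

Definition nrect (A : {set pt}) : nat :=
  #|[set q : pt * pt * pt * pt |
      [&& q.1.1.1 \in A, q.1.1.2 \in A, q.1.2 \in A, q.2 \in A &
          rectangle q.1.1.1 q.1.1.2 q.1.2 q.2]]|.

Definition is_line (l : {set pt}) : Prop :=
  exists (p v : pt), v != (0, 0) /\ l = [set padd p (pscale t v) | t : F].

Definition k_regular (R : realType) (C0 : R) (A : {set pt}) (k : R) : Prop :=
  k <= C0 * Num.sqrt (#|A|%:R) /\
  exists (L : {set {set pt}}) (Al : {set pt} -> {set pt}),
    [/\ (forall l, l \in L -> is_line l),
        k / C0 <= #|L|%:R /\ #|L|%:R <= C0 * k,
        A = \bigcup_(l in L) Al l,
        (forall l1 l2, l1 \in L -> l2 \in L -> l1 != l2 -> [disjoint Al l1 & Al l2]) &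
        (forall l, l \in L ->
           [/\ Al l \subset l,
               #|A|%:R / (C0 * k) <= #|Al l|%:R &
               #|Al l|%:R <= C0 * #|A|%:R / k])].
End Defs.

(* Main.v *)
Require Import Defs.
From HB Require Import structures.
From mathcomp Require Import all_boot all_order all_algebra.
From mathcomp Require Import reals ring lra zify.
Import Order.TTheory GRing.Theory Num.Theory.
Set Implicit Arguments. Unset Strict Implicit. Unset Printing Implicit Defensive.
Local Open Scope ring_scope.

Section Geo.
Variable F : finFieldType.
Hypothesis Hsq : forall x : F, x * x != -1.

Definition cross (a b : pt F) : F := a.1 * b.2 - a.2 * b.1.

Lemma sq_sum0 (a b : F) : a * a + b * b = 0 -> a = 0 /\ b = 0.
Proof.
move=> H.
have [b0|bn0] := eqVneq b 0.
  by move: H; rewrite b0 mulr0 addr0 => /eqP; rewrite mulf_eq0 orbb => /eqP.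
exfalso; move: (Hsq (a / b)); rewrite -[X in X != _](@addrK _ 1).
have -> : a / b * (a / b) + 1 = (a * a + b * b) / (b * b) by field; exact: bn0.
by rewrite H mul0r sub0r eqxx.
Qed.

Lemma iso0 (a : pt F) : dot a a = 0 -> a = (0, 0).
Proof. by case: a => a1 a2; rewrite /dot /= => /sq_sum0 [-> ->]. Qed.

Lemma dotC (a b : pt F) : dot a b = dot b a.
Proof. by rewrite /dot mulrC [a.2 * _]mulrC. Qed.

Lemma perp_cross (u a b : pt F) : u != (0, 0) -> dot a u = 0 -> dot b u = 0 ->
  cross a b = 0.
Proof.
case: u => u1 u2; case: a => a1 a2; case: b => b1 b2; rewrite /dot /cross /= => Hu Ha Hb.
have E1 : u1 * (a1 * b2 - a2 * b1) = - (a2 * (b1 * u1 + b2 * u2)) + b2 * (a1 * u1 + a2 * u2) by ring.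
have E2 : u2 * (a1 * b2 - a2 * b1) = a1 * (b1 * u1 + b2 * u2) - b1 * (a1 * u1 + a2 * u2) by ring.
rewrite Ha Hb !mulr0 oppr0 addr0 in E1; rewrite Ha Hb !mulr0 subr0 in E2.
have [u10|u1n0] := eqVneq u1 0.
  have [u20|u2n0] := eqVneq u2 0; first by move: Hu; rewrite u10 u20 eqxx.
  by move/eqP: E2; rewrite mulf_eq0 (negbTE u2n0) => /eqP.
by move/eqP: E1; rewrite mulf_eq0 (negbTE u1n0) => /eqP.
Qed.

Lemma lag (a b : pt F) : b != (0, 0) -> dot a b = 0 -> cross a b = 0 -> a = (0, 0).
Proof.
move=> Hb Hd Hc; apply: iso0.
have E : dot a a * dot b b = dot a b * dot a b + cross a b * cross a b.
  by rewrite /dot /cross; ring.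
rewrite Hd Hc mulr0 addr0 in E.
move/eqP: E; rewrite mulf_eq0 => /orP [/eqP //|/eqP /iso0 E].
by move: Hb; rewrite E eqxx.
Qed.

Lemma psub0 (a b : pt F) : psub a b = (0, 0) -> a = b.
Proof.
case: a b => a1 a2 [b1 b2]; rewrite /psub /= => [[h1 h2]].
by move/eqP: h1; rewrite subr_eq0 => /eqP ->; move/eqP: h2; rewrite subr_eq0 => /eqP ->.
Qed.

Lemma rect_a (x0 x2 x3 : pt F) : rectangle x0 x0 x2 x3 -> x2 = x3.
Proof.
case/and4P => _ /eqP c1 /eqP c2 _.
suff: psub x3 x2 = (0, 0) by move/psub0.
apply: iso0.
have -> : dot (psub x3 x2) (psub x3 x2) =
  - (dot (psub x2 x0) (psub x3 x2) + dot (psub x3 x2) (psub x0 x3)) by rewrite /dot /psub /=; ring.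
by rewrite c1 c2 addr0 oppr0.
Qed.

Lemma rect_b (x0 x1 x3 : pt F) : rectangle x0 x1 x1 x3 -> x3 = x0.
Proof.
case/and4P => _ _ /eqP c1 /eqP c2.
suff: psub x3 x0 = (0, 0) by move/psub0.
apply: iso0.
have -> : dot (psub x3 x0) (psub x3 x0) =
  - (dot (psub x3 x1) (psub x0 x3) + dot (psub x0 x3) (psub x1 x0)) by rewrite /dot /psub /=; ring.
by rewrite c1 c2 addr0 oppr0.
Qed.

Lemma rect_c (x0 x1 x2 x3 : pt F) : x0 != x1 -> x1 != x2 -> rectangle x0 x1 x2 x3 ->
  x3 = (x0.1 + x2.1 - x1.1, x0.2 + x2.2 - x1.2).
Proof.
move=> h01 h12 /and4P [/eqP c0 /eqP c1 _ /eqP c3].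
set d := psub x3 (x0.1 + x2.1 - x1.1, x0.2 + x2.2 - x1.2).
suff: d = (0, 0) by move/psub0.
have hu : psub x1 x0 != (0, 0) by apply: contraNneq h01 => /psub0 ->.
have hw : psub x2 x1 != (0, 0) by apply: contraNneq h12 => /psub0 ->.
have dw : dot d (psub x2 x1) = 0.
  have -> : dot d (psub x2 x1) = dot (psub x2 x1) (psub x3 x2) + dot (psub x1 x0) (psub x2 x1)
    by rewrite /d /dot /psub /=; ring.
  by rewrite c1 c0 addr0.
have du : dot d (psub x1 x0) = 0.
  have -> : dot d (psub x1 x0) = - dot (psub x0 x3) (psub x1 x0) - dot (psub x1 x0) (psub x2 x1)
    by rewrite /d /dot /psub /=; ring.
  by rewrite c3 c0 oppr0 addr0.
apply: (lag hw dw); apply: (perp_cross hu du).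
by rewrite dotC.
Qed.

Definition Tset (A : {set pt F}) : {set pt F * pt F * pt F} :=
  [set t | [&& t.1.1 \in A, t.1.2 \in A, t.2 \in A, t.1.1 != t.1.2 &
             corner t.1.1 t.1.2 t.2]].

Lemma step1 (A : {set pt F}) : (nrect A <= 2 * #|A| ^ 2 + #|Tset A|)%N.
Proof.
pose f1 := fun p : pt F * pt F => (p.1, p.1, p.2, p.2).
pose f2 := fun p : pt F * pt F => (p.1, p.2, p.2, p.1).
pose g := fun t : pt F * pt F * pt F =>
  (t.1.1, t.1.2, t.2, (t.1.1.1 + t.2.1 - t.1.2.1, t.1.1.2 + t.2.2 - t.1.2.2)).
rewrite /nrect.
set S := [set q | _].
have sub : S \subset (f1 @: setX A A) :|: (f2 @: setX A A) :|: (g @: Tset A).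
  apply/subsetP => [[[[x0 x1] x2] x3]]; rewrite inE /= => /and5P [h0 h1 h2 h3 hr].
  have [e01|n01] := eqVneq x0 x1.
    subst x1; have e23 := rect_a hr; subst x3.
    by rewrite !inE; apply/orP; left; apply/orP; left;
       apply/imsetP; exists (x0, x2) => //; rewrite inE h0 h2.
  have [e12|n12] := eqVneq x1 x2.
    subst x2; have e30 := rect_b hr; subst x3.
    by rewrite !inE; apply/orP; left; apply/orP; right;
       apply/imsetP; exists (x0, x1) => //; rewrite inE h0 h1.
  have e3 := rect_c n01 n12 hr; subst x3.
  rewrite !inE; apply/orP; right; apply/imsetP; exists (x0, x1, x2) => //.
  by rewrite inE /= h0 h1 h2 n01 /=; case/and4P: hr.
apply: leq_trans (subset_leq_card sub) _.
apply: leq_trans (leq_card_setU _ _) _.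
apply: leq_add; last exact: leq_imset_card.
apply: leq_trans (leq_card_setU _ _) _.
rewrite mul2n -addnn.
by apply: leq_add; apply: leq_trans (leq_imset_card _ _) _; rewrite cardsX mulnn.
Qed.

Lemma card_sum (T : finType) (P : pred T) : #|[set z | P z]| = (\sum_z (P z : nat))%N.
Proof. by rewrite -sum1dep_card big_mkcond; apply: eq_bigr => z _; case: (P z). Qed.

Definition bad (p v x0 x1 : pt F) : bool :=
  (dot v (psub x1 x0) == 0) && (dot (psub p x1) (psub x1 x0) == 0).

Lemma line_count (p v : pt F) (Al : {set pt F}) (x0 x1 : pt F) :
  v != (0, 0) -> x0 != x1 ->
  Al \subset [set padd p (pscale t v) | t : F] ->
  (#|[set z | (z \in Al) && corner x0 x1 z]| <= 1 + #|Al| * bad p v x0 x1)%N.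
Proof.
move=> hv h01 hsub.
case: (boolP (bad p v x0 x1)) => hb.
  rewrite muln1; apply: leq_trans (leq_addl _ _); apply: subset_leq_card.
  by apply/subsetP => z; rewrite inE => /andP [].
rewrite muln0 addn0; apply/card_le1_eqP => z z'; rewrite !inE => /andP [zA cz] /andP [z'A cz'].
have /imsetP [t _ ez] := subsetP hsub _ zA.
have /imsetP [t' _ ez'] := subsetP hsub _ z'A.
have key : forall s, dot (psub x1 x0) (psub (padd p (pscale s v)) x1) =
    dot (psub p x1) (psub x1 x0) + s * dot v (psub x1 x0).
  by move=> s; rewrite /dot /psub /padd /pscale /=; ring.
move: cz cz'; rewrite /corner ez ez' !key => /eqP c /eqP c'.
have [dv0|dvn0] := eqVneq (dot v (psub x1 x0)) 0.
  move: hb; rewrite /bad dv0 eqxx /=.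
  by move: c; rewrite dv0 mulr0 addr0 => ->; rewrite eqxx.
have : t * dot v (psub x1 x0) = t' * dot v (psub x1 x0).
  by apply: (@addrI _ (dot (psub p x1) (psub x1 x0))); rewrite c c'.
by move/(mulIf dvn0) => ->.
Qed.

Lemma bad_inj (p v x0 x1 x1' : pt F) : v != (0, 0) -> x0 != x1 -> x0 != x1' ->
  bad p v x0 x1 -> bad p v x0 x1' -> x1 = x1'.
Proof.
move=> hv h1 h1' /andP [/eqP a1 /eqP b1] /andP [/eqP a2 /eqP b2].
have hu : psub x1 x0 != (0, 0) by apply: contraNneq h1 => /psub0 ->.
have hu' : psub x1' x0 != (0, 0) by apply: contraNneq h1' => /psub0 ->.
have c1 := perp_cross hu b1 a1.
have c2 := perp_cross hu' b2 a2.
suff /psub0 -> : psub x1' x1 = (0, 0) by [].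
apply: (lag hv).
  have -> : dot (psub x1' x1) v = dot v (psub x1' x0) - dot v (psub x1 x0)
    by rewrite /dot /psub /=; ring.
  by rewrite a1 a2 subrr.
have -> : cross (psub x1' x1) v = cross (psub p x1) v - cross (psub p x1') v
  by rewrite /cross /psub /=; ring.
by rewrite c1 c2 subrr.
Qed.

Lemma leq_b (b : bool) (n : nat) : (b -> 0 < n)%N -> (b <= n)%N.
Proof. by case: b => // ->. Qed.

Lemma bool_dist (a b : bool) (n : nat) : (a * (1 + n * b) = a + n * (a && b))%N.
Proof. by case: a; case: b; rewrite ?muln0 ?muln1 ?mul0n ?mul1n. Qed.

Lemma step2 (A : {set pt F}) (L : {set {set pt F}}) (Al : {set pt F} -> {set pt F}) :
  (forall l, l \in L -> is_line l) ->
  A = \bigcup_(l in L) Al l ->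
  (forall l, l \in L -> Al l \subset l) ->
  (#|Tset A| <= #|L| * (2 * #|A| ^ 2))%N.
Proof.
move=> hline hA hsub.
pose P (xy : pt F * pt F) := [&& xy.1 \in A, xy.2 \in A & xy.1 != xy.2].
have E : #|Tset A| = (\sum_xy \sum_z ((P xy && ((z \in A) && corner xy.1 xy.2 z)) : nat))%N.
  rewrite /Tset card_sum pair_bigA /=; apply: eq_bigr => [[[a b] c]] _ /=.
  by rewrite /P /=; case: (a \in A); case: (b \in A); case: (c \in A); case: (a != b).
rewrite E.
apply: (@leq_trans (\sum_xy \sum_z \sum_(l in L)
   ((P xy && ((z \in Al l) && corner xy.1 xy.2 z)) : nat))%N).
  apply: leq_sum => xy _; apply: leq_sum => z _.
  apply: leq_b => /andP [hP /andP [zA hc]].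
  have /bigcupP [l lL zl] : z \in \bigcup_(l in L) Al l by rewrite -hA.
  by rewrite (bigD1 l) //= hP zl hc.
rewrite (eq_bigr (fun xy => \sum_(l in L) \sum_z
   ((P xy && ((z \in Al l) && corner xy.1 xy.2 z)) : nat))%N); last first.
  by move=> xy _; rewrite exchange_big.
rewrite exchange_big /= -sum_nat_const; apply: leq_sum => l lL.
have [p [v [hv el]]] := hline l lL.
have AlA : Al l \subset A by rewrite hA; apply: (bigcup_sup l lL).
have AlL : Al l \subset [set padd p (pscale t v) | t : F] by rewrite -el; exact: hsub.
apply: (@leq_trans (\sum_xy (P xy * (1 + #|Al l| * bad p v xy.1 xy.2)))%N).
  apply: leq_sum => xy _.
  case: (boolP (P xy)) => hP /=; last by rewrite big1.
  rewrite mul1n -card_sum.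
  by apply: line_count => //; case/and3P: hP.
rewrite (eq_bigr (fun xy => P xy + #|Al l| * (P xy && bad p v xy.1 xy.2))%N); last first.
  by move=> xy _; rewrite bool_dist.
rewrite big_split /= -big_distrr /= -!card_sum mul2n -addnn.
apply: leq_add.
  rewrite -mulnn -cardsX; apply: subset_leq_card; apply/subsetP => xy.
  by rewrite !inE => /and3P [-> ->].
rewrite -mulnn; apply: leq_mul; first exact: subset_leq_card.
set S' := [set xy | _].
rewrite -(card_in_imset (f := fst)).
  apply: subset_leq_card; apply/subsetP => a /imsetP [xy].
  by rewrite inE => /andP [/and3P [h _ _] _] ->.
move=> [a b] [a' b']; rewrite !inE /= => /andP [/and3P [_ _ hb] hbad]
  /andP [/and3P [_ _ hb'] hbad'] ea.
by subst a'; congr pair; exact: (bad_inj hv hb hb' hbad hbad').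
Qed.
End Geo.
Unset Implicit Arguments.
Unset Strict Implicit.

Theorem lemma4p3 (R : realType) (C0 : R) :
  1 <= C0 ->
  exists K : R, 0 < K /\
    forall (F : finFieldType),
      (2%:R : F) != 0 ->
      (forall x : F, x * x != -1) ->
      forall (A : {set F * F}) (k : R),
        k_regular C0 A k ->
        (nrect A)%:R <= K * (#|A|%:R ^+ 2) * k.
Proof.
move=> hC.
exists (4 * C0); split; first lra.
move=> F _ hsq A k [hk [L [Al [hl [hL1 hL2] hA hdisj hAl]]]].
have n1 := step1 hsq A.
have n2 := @step2 F hsq A L Al hl hA (fun l lL => let: And3 a _ _ := hAl l lL in a).
have [L0|Lpos] := posnP #|L|.
  have AE : A = set0.
    by rewrite hA; move/eqP: L0; rewrite cards_eq0 => /eqP ->; rewrite big_set0.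
  have : nrect A = 0%N by apply/eqP; rewrite -leqn0; move: n1 n2; rewrite AE cards0; lia.
  move=> ->; rewrite AE cards0 expr0n /= mulr0 mul0r; lra.
have h3 : (#|A| ^ 2 <= #|L| * #|A| ^ 2)%N by rewrite leq_pmull.
have hn : (nrect A <= 4 * #|L| * #|A| ^ 2)%N.
  apply: (leq_trans n1); move: n2 h3; set a := (#|A| ^ 2)%N; set b := (#|L| * a)%N; set c := #|Tset A|; lia.
apply: (@le_trans _ _ ((4 * #|L| * #|A| ^ 2)%N)%:R); first by rewrite ler_nat.
rewrite natrM natrM.
have -> : 4 * C0 * #|A|%:R ^+ 2 * k = 4%:R * (C0 * k) * (#|A| ^ 2)%:R.
  by rewrite natrX; ring.
apply: ler_wpM2r; first exact: ler0n.
apply: ler_wpM2l => //.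
Qed.
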